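(* Let $A\in\mathbb C^{n\times N}$, $x_0\in\mathbb C^n$ with $\|x_0\|=1$, $b=|A^*x_0|$, $I\subset\{1,\dots,N\}$, and let $x_{\rm null}$ be a unit vector minimizing $\|A_I^*x\|$ over unit vectors $x\in\mathbb C^n$, with phase chosen so that $x_0^*x_{\rm null}\ge0$. Then there exists $x_\perp\in\mathbb C^n$ with $x_\perp^*x_0=0$ and $\|x_\perp\|=1$ such that $$\tfrac14\|x_0x_0^*-x_{\rm null}x_{\rm null}^*\|^2\le\frac{\|b_I\|^2}{\|A_I^*x_\perp\|^2}$$ (with the right side interpreted as $+\infty$ if $A_I^*x_\perp=0$).
   Context: $A_I$ is the submatrix of $A$ consisting of the columns indexed by $I$, $b_I=(b(i))_{i\in I}=|A_I^*x_0|$, and the norm on the left is the Frobenius norm. *)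

(* Defs.v *)
(* Complex scalars: an arbitrary numClosedFieldType C
   (e.g. algC); conjugation z^*, and the partial order 0 <= z means z real, >= 0. *)
From HB Require Import structures.
From mathcomp Require Import all_boot all_order all_algebra.
Set Implicit Arguments. Unset Strict Implicit. Unset Printing Implicit Defensive.
Import Order.TTheory GRing.Theory Num.Theory.
Local Open Scope ring_scope.

Definition adjmx (C : numClosedFieldType) m n (M : 'M[C]_(m, n)) : 'M[C]_(n, m) :=
  (map_mx Num.conj M)^T.

Definition fro2 (C : numClosedFieldType) m n (M : 'M[C]_(m, n)) : C :=
  \sum_(i < m) \sum_(j < n) `|M i j| ^+ 2.

(* A_I : the submatrix of A consisting of the columns indexed by I
   (in increasing order of indices) *)
Definition colsubI (C : numClosedFieldType) n N (A : 'M[C]_(n, N)) (I : {set 'I_N})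
  : 'M[C]_(n, #|I|) := colsub (fun k : 'I_#|I| => enum_val k) A.

Definition absmx (C : numClosedFieldType) m n (M : 'M[C]_(m, n)) : 'M[C]_(m, n) :=
  map_mx (fun z => `|z|) M.

(* Main.v *)
Require Import Defs.
From HB Require Import structures.
From mathcomp Require Import all_boot all_order all_algebra.
Import Order.TTheory GRing.Theory Num.Theory.
Local Open Scope ring_scope.
From mathcomp Require Import ring.
Set Implicit Arguments. Unset Strict Implicit. Unset Printing Implicit Defensive.
Import Order.TTheory GRing.Theory Num.Theory.
Local Open Scope ring_scope.

Definition dotv (C : numClosedFieldType) m (u v : 'cV[C]_m) : C :=
  \sum_i (u i 0)^* * v i 0.

Lemma fro2_dot (C : numClosedFieldType) m (v : 'cV[C]_m) : fro2 v = dotv v v.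
Proof.
rewrite /fro2 /dotv; apply: eq_bigr => i _.
by rewrite big_ord1 normCK mulrC.
Qed.

Lemma adj_dot (C : numClosedFieldType) m (u v : 'cV[C]_m) :
  (adjmx u *m v) 0 0 = dotv u v.
Proof.
by rewrite mxE /dotv; apply: eq_bigr => i _; rewrite /adjmx !mxE.
Qed.

Lemma dotDr (C : numClosedFieldType) m (u v w : 'cV[C]_m) :
  dotv u (v + w) = dotv u v + dotv u w.
Proof. by rewrite /dotv -big_split; apply: eq_bigr => i _; rewrite mxE mulrDr. Qed.

Lemma dotZr (C : numClosedFieldType) m (u v : 'cV[C]_m) a :
  dotv u (a *: v) = a * dotv u v.
Proof. by rewrite /dotv mulr_sumr; apply: eq_bigr => i _; rewrite mxE mulrCA. Qed.

Lemma dotNr (C : numClosedFieldType) m (u v : 'cV[C]_m) :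
  dotv u (- v) = - dotv u v.
Proof. by rewrite -scaleN1r dotZr mulN1r. Qed.

Lemma dotC (C : numClosedFieldType) m (u v : 'cV[C]_m) :
  dotv v u = (dotv u v)^*.
Proof.
rewrite /dotv rmorph_sum; apply: eq_bigr => i _; by rewrite rmorphM /= conjCK mulrC.
Qed.

Lemma dotDl (C : numClosedFieldType) m (u v w : 'cV[C]_m) :
  dotv (v + w) u = dotv v u + dotv w u.
Proof. by rewrite dotC dotDr rmorphD /= -!dotC. Qed.

Lemma dotZl (C : numClosedFieldType) m (u v : 'cV[C]_m) a :
  dotv (a *: v) u = a^* * dotv v u.
Proof. by rewrite dotC dotZr rmorphM /= -!dotC. Qed.

Lemma dotNl (C : numClosedFieldType) m (u v : 'cV[C]_m) :
  dotv (- v) u = - dotv v u.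
Proof. by rewrite dotC dotNr rmorphN /= -!dotC. Qed.

Lemma fro2_ge0 (C : numClosedFieldType) m n (M : 'M[C]_(m, n)) : 0 <= fro2 M.
Proof. by apply: sumr_ge0 => i _; apply: sumr_ge0 => j _; apply: exprn_ge0. Qed.

Lemma fro2_eq0 (C : numClosedFieldType) m (v : 'cV[C]_m) : fro2 v = 0 -> v = 0.
Proof.
move=> h; apply/matrixP => i j; rewrite ord1 mxE.
have h1 : \sum_(j < 1) `|v i j| ^+ 2 = 0.
  apply: (psumr_eq0P _ h) => // k _.
  by apply: sumr_ge0 => l _; apply: exprn_ge0.
move: h1; rewrite big_ord1 => /eqP.
by rewrite expf_eq0 /= normr_eq0 => /eqP.
Qed.

Lemma fro2Z (C : numClosedFieldType) m (v : 'cV[C]_m) k :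
  fro2 (k *: v) = `|k| ^+ 2 * fro2 v.
Proof.
rewrite !fro2_dot dotZl dotZr normCK; ring.
Qed.

Lemma unitize (C : numClosedFieldType) m (v : 'cV[C]_m) (r : C) :
  0 < r -> fro2 v = r -> fro2 ((sqrtC r)^-1 *: v) = 1.
Proof.
move=> r0 hv; rewrite fro2Z hv normfV ger0_norm ?sqrtC_ge0 ?ltW //.
by rewrite exprVn sqrtCK mulVf // gt_eqF.
Qed.

Lemma two_lt1 (C : numClosedFieldType) : ((2:C) < 1) = false.
Proof. by rewrite (_ : (1:C) = 1%:R) // ltr_nat. Qed.

Lemma minV (C : numClosedFieldType) m k (W : 'M[C]_(k, m)) (x : 'cV[C]_m) :
  (forall v : 'cV[C]_m, fro2 v = 1 -> fro2 (W *m x) <= fro2 (W *m v)) ->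
  forall v : 'cV[C]_m, fro2 (W *m x) * fro2 v <= fro2 (W *m v).
Proof.
move=> h v; have [->|v0] := eqVneq v 0.
  by rewrite mulmx0 (_ : fro2 (0 : 'cV[C]_m) = 0 :> C) ?mulr0 ?fro2_ge0 // /fro2 big1 // => i _; rewrite big1 // => j _; rewrite mxE normr0 expr0n.
have r0 : 0 < fro2 v.
  rewrite lt_def fro2_ge0 andbT; apply/eqP => /fro2_eq0 h0; by rewrite h0 eqxx in v0.
have := h _ (unitize r0 (erefl _)).
have sq : 0 <= sqrtC (fro2 v) by rewrite sqrtC_ge0 fro2_ge0.
rewrite -scalemxAr fro2Z normfV (ger0_norm sq) exprVn sqrtCK.
by rewrite mulrC -ler_pdivlMr // mulrC.
Qed.

Lemma stat (C : numClosedFieldType) m k (W : 'M[C]_(k, m)) (x y : 'cV[C]_m) :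
  (forall v : 'cV[C]_m, fro2 (W *m x) * fro2 v <= fro2 (W *m v)) -> fro2 x = 1 ->
  dotv x y = 0 -> dotv (W *m x) (W *m y) = 0.
Proof.
move=> hmin hx hxy.
set R := dotv (W *m x) (W *m y).
have [//|hR] := eqVneq R 0; exfalso.
set e := fro2 (W *m y); set g := fro2 y; set l := fro2 (W *m x).
set K := e - l * g.
set eps := (`|K| + 1)^-1.
have eps0 : 0 < eps by rewrite invr_gt0 ltr_wpDl // ltr01.
set t := - (eps * R^*).
have H := hmin (x + t *: y).
rewrite mulmxDr -scalemxAr !fro2_dot !(dotDl, dotDr, dotZl, dotZr) in H.
have hyx : dotv y x = 0 by rewrite dotC hxy conjC0.
have hR' : dotv (W *m y) (W *m x) = R^* by rewrite dotC.
rewrite hyx hR' -!fro2_dot -/R -/e -/g -/l hx in H.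
have tc : t^* = - (eps * R) by rewrite rmorphN rmorphM /= conjCK geC0_conj // ltW.
rewrite tc -subr_ge0 in H.
rewrite hxy in H.
have E : l + t * R + (- (eps * R) * R^* + - (eps * R) * (t * e)) -
    l * (1 + t * 0 + (- (eps * R) * 0 + - (eps * R) * (t * g)))
   = (eps * (R * R^*)) * (eps * K - 2).
  rewrite /t /K; ring.
rewrite E pmulr_rge0 ?subr_ge0 in H; last first.
  by rewrite mulr_gt0 // -normCK exprn_gt0 // normr_gt0.
have Kr : K \is Num.real by rewrite rpredB // ?rpredM // ger0_real // fro2_ge0.
have h1 : eps * K <= eps * `|K|.
  rewrite -{2}(ger0_norm (ltW eps0)) -normrM; apply: real_ler_norm.
  by rewrite rpredM // ger0_real // ltW.
have h2 : eps * `|K| < 1 by rewrite mulrC ltr_pdivrMr ?mul1r ?ltrDl ?ltr01 // ltr_wpDl // ltr01.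
have := le_lt_trans (le_trans H h1) h2.
by rewrite two_lt1.
Qed.

Lemma fro2_rank2 (C : numClosedFieldType) m (a b : 'cV[C]_m) :
  fro2 (a *m adjmx a - b *m adjmx b) =
  fro2 a * fro2 a + fro2 b * fro2 b - dotv b a * dotv a b - dotv a b * dotv b a.
Proof.
rewrite !fro2_dot /dotv !big_distrlr /= -big_split /= -!sumrB /fro2.
apply: eq_bigr => i _; rewrite -big_split /= -!sumrB.
apply: eq_bigr => j _.
rewrite !mxE !big_ord1 /adjmx !mxE normCK !rmorphB /= !rmorphM /= !conjCK.
ring.
Qed.

Lemma dot_delta (C : numClosedFieldType) m (i : 'I_m) (v : 'cV[C]_m) :
  dotv (delta_mx i 0) v = v i 0.
Proof.
rewrite /dotv (bigD1 i) //= big1 => [|k hk]; first by rewrite !mxE !eqxx /= rmorph1 mul1r addr0.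
by rewrite !mxE (negbTE hk) /= rmorph0 mul0r.
Qed.

Lemma orth_exists (C : numClosedFieldType) m (x0 : 'cV[C]_m) : (2 <= m)%N ->
  exists y : 'cV[C]_m, dotv y x0 = 0 /\ fro2 y = 1.
Proof.
move=> hm.
have h0 : (0 < m)%N by apply: leq_trans hm.
have h1 : (1 < m)%N by [].
pose i0 := Ordinal h0; pose i1 := Ordinal h1.
have [z0|nz0] := eqVneq (x0 i0 0) 0.
  exists (delta_mx i0 0); by rewrite fro2_dot !dot_delta z0 mxE !eqxx.
pose y : 'cV[C]_m := (x0 i1 0)^* *: delta_mx i0 0 - (x0 i0 0)^* *: delta_mx i1 0.
have i01 : (i0 == i1) = false by [].
have hy : dotv y x0 = 0.
  rewrite /y !(dotDl, dotNl, dotZl) !dot_delta !conjCK; ring.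
have ry : fro2 y = `|x0 i1 0| ^+ 2 + `|x0 i0 0| ^+ 2.
  rewrite fro2_dot /y !(dotDl, dotNl, dotZl, dotDr, dotNr, dotZr) !dot_delta !mxE !eqxx !andbT /i0 /i1 /= !conjCK !normCK; ring.
have r0 : 0 < fro2 y by rewrite ry ltr_wpDl ?exprn_ge0 // exprn_gt0 // normr_gt0.
exists ((sqrtC (fro2 y))^-1 *: y); split; last exact: unitize r0 (erefl _).
by rewrite dotZl hy mulr0.
Qed.

Lemma mainW (C : numClosedFieldType) n k (W : 'M[C]_(k, n)) (x0 x : 'cV[C]_n) :
  (2 <= n)%N -> fro2 x0 = 1 -> fro2 x = 1 ->
  (forall v : 'cV[C]_n, fro2 v = 1 -> fro2 (W *m x) <= fro2 (W *m v)) ->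
  0 <= dotv x0 x ->
  exists xp : 'cV[C]_n, dotv xp x0 = 0 /\ fro2 xp = 1 /\
    (W *m xp != 0 -> 4^-1 * fro2 (x0 *m adjmx x0 - x *m adjmx x)
       <= fro2 (W *m x0) / fro2 (W *m xp)).
Proof.
move=> hn h0 hx hmin hc.
have hm := minV hmin.
rewrite fro2_rank2 h0 hx.
set c := dotv x0 x in hc *.
have cc : c^* = c by apply: geC0_conj.
have hxx0 : dotv x x0 = c by rewrite dotC -/c cc.
rewrite hxx0.
set l := fro2 (W *m x); set a := fro2 (W *m x0).
have la : l <= a by apply: hmin.
have l0 : 0 <= l by apply: fro2_ge0.
have hst := @stat _ _ _ W x (x0 - c *: x) hm hx.
rewrite mulmxBr -scalemxAr !(dotDr, dotNr, dotZr) -!fro2_dot -/l hx hxx0 mulr1 subrr in hst.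
have P : dotv (W *m x) (W *m x0) = c * l.
  by apply/eqP; rewrite -subr_eq0; apply/eqP; apply: hst.
have Q : dotv (W *m x0) (W *m x) = c * l.
  by rewrite dotC P rmorphM /= cc geC0_conj.
set s2 := 1 - c ^+ 2.
set z := x - c *: x0.
have fz : fro2 z = s2.
  rewrite fro2_dot /z !(dotDl, dotNl, dotZl, dotDr, dotNr, dotZr) -!fro2_dot hx h0 hxx0 cc -/c /s2; ring.
have fWz : fro2 (W *m z) = l - 2 * c ^+ 2 * l + c ^+ 2 * a.
  rewrite fro2_dot /z mulmxBr -scalemxAr !(dotDl, dotNl, dotZl, dotDr, dotNr, dotZr) -!fro2_dot P Q cc -/l -/a; ring.
have s20 : 0 <= s2 by rewrite -fz fro2_ge0.
have Fa : fro2 (W *m z) <= a.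
  rewrite -subr_ge0 (_ : a - fro2 (W *m z) = s2 * (a - l) + c ^+ 2 * l); last by rewrite fWz /s2; ring.
  by rewrite addr_ge0 // mulr_ge0 // ?subr_ge0 // exprn_ge0.
have E : 1 * 1 + 1 * 1 - c * c - c * c = 2 * s2 by rewrite /s2; ring.
rewrite E.
have [hs|hs] := eqVneq s2 0.
  have [y [hy1 hy2]] := orth_exists x0 hn.
  exists y; split => //; split => // _.
  by rewrite hs !mulr0 divr_ge0 // fro2_ge0.
have s2p : 0 < s2 by rewrite lt_def hs s20.
exists ((sqrtC s2)^-1 *: z); split.
  by rewrite dotZl /z dotDl dotNl dotZl -fro2_dot h0 hxx0 cc mulr1 subrr mulr0.
split; first exact: unitize s2p fz.
move=> nz.
have sq : 0 <= sqrtC s2 by rewrite sqrtC_ge0.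
have fd : fro2 (W *m ((sqrtC s2)^-1 *: z)) = s2^-1 * fro2 (W *m z).
  by rewrite -scalemxAr fro2Z normfV (ger0_norm sq) exprVn sqrtCK.
have d0 : 0 < fro2 (W *m ((sqrtC s2)^-1 *: z)).
  rewrite lt_def fro2_ge0 andbT; apply/eqP => /fro2_eq0 h; by rewrite h eqxx in nz.
rewrite ler_pdivlMr // fd.
have F0 : 0 <= fro2 (W *m z) by apply: fro2_ge0.
rewrite (_ : 4^-1 * (2 * s2) * (s2^-1 * fro2 (W *m z)) = (2 / 4) * fro2 (W *m z)); last first.
  by field.
apply: le_trans Fa; apply: ler_piMl => //.
by rewrite ler_pdivrMr ?ltr0n // mul1r (_ : (1:C) = 1%:R) // ler_nat.
Qed.

Theorem propositionA1 (C : numClosedFieldType) (n N : nat) (hn : (2 <= n)%N)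
  (A : 'M[C]_(n, N)) (x0 : 'cV[C]_n) (I : {set 'I_N}) (xnull : 'cV[C]_n) :
  fro2 x0 = 1 ->
  fro2 xnull = 1 ->
  (forall x : 'cV[C]_n, fro2 x = 1 ->
     fro2 (adjmx (colsubI A I) *m xnull) <= fro2 (adjmx (colsubI A I) *m x)) ->
  0 <= (adjmx x0 *m xnull) 0 0 ->
  let b : 'cV[C]_N := absmx (adjmx A *m x0) in
  let bI : 'cV[C]_#|I| := rowsub (fun k : 'I_#|I| => enum_val k) b in
  exists xperp : 'cV[C]_n,
    adjmx xperp *m x0 = 0 /\ fro2 xperp = 1 /\
    (adjmx (colsubI A I) *m xperp != 0 ->
     4^-1 * fro2 (x0 *m adjmx x0 - xnull *m adjmx xnull)
       <= fro2 bI / fro2 (adjmx (colsubI A I) *m xperp)).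
Proof.
move=> h0 hx hmin hc b bI.
rewrite adj_dot in hc.
have [xp [h1 [h2 h3]]] := mainW hn h0 hx hmin hc.
have hb : fro2 bI = fro2 (adjmx (colsubI A I) *m x0).
  rewrite /fro2; apply: eq_bigr => k _; apply: eq_bigr => j _.
  rewrite /bI /b /absmx !mxE normr_id; congr (`|_| ^+ 2).
  by apply: eq_bigr => i _; rewrite /adjmx /colsubI !mxE.
exists xp; split; last by rewrite hb.
by apply/matrixP => i j; rewrite !ord1 adj_dot h1 mxE.
Qed.
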